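(* There exist infinitely many finite simple graphs $G$ with $\chi_{DP}(G) < AT(G)$; moreover, for every real $M > 0$ there exists a finite simple graph $G$ with $AT(G) / \chi_{DP}(G) > M$.
   Context: Alon--Tarsi number: for a digraph $D$, an Eulerian subdigraph is a spanning subdigraph $F$ with $d^+_F(v) = d^-_F(v)$ for all $v$, called even or odd according to the parity of its number of edges; $AT(G)$ is the minimum $k$ such that some orientation $D$ of $G$ has all outdegrees less than $k$ and the numbers of even and odd Eulerian subdigraphs of $D$ differ. Correspondence coloring: a correspondence assignment $(L,C)$ for $G$ consists of a list $L(v)$ of colors for each vertex $v$ and, for each edge $uv$, a partial matching $C_{uv}$ between $\{u\}\times L(u)$ and $\{v\}\times L(v)$. An $(L,C)$-coloring is a choice $\phi(v)\in L(v)$ for each $v$ such that for every edge $uv$, $(u,\phi(u))$ and $(v,\phi(v))$ are not matched in $C_{uv}$. $G$ is $k$-correspondence-colorable if it has an $(L,C)$-coloring for every correspondence assignment with all lists of size $k$; the correspondence chromatic number $\chi_{DP}(G)$ is the least such $k$. *)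

(* Defs.v *)
From mathcomp Require Import all_boot all_order all_algebra.
From mathcomp Require Export reals.
Set Implicit Arguments. Unset Strict Implicit. Unset Printing Implicit Defensive.

Section Defs.
Variable V : finType.

Definition simple_graph (e : rel V) : Prop :=
  (forall u v, e u v = e v u) /\ (forall v, ~~ e v v).

Definition orientation (e : rel V) (d : rel V) : Prop :=
  forall u v, e u v = (d u v || d v u) /\ ~~ (d u v && d v u).

Definition outdeg (d : rel V) (v : V) : nat := #|[set w | d v w]|.

Definition eulerian_sub (d : rel V) (F : {set V * V}) : bool :=
  (F \subset [set p | d p.1 p.2]) &&
  [forall v, #|[set p in F | p.1 == v]| == #|[set p in F | p.2 == v]|].

Definition EE (d : rel V) : nat :=
  #|[set F : {set V * V} | eulerian_sub d F && ~~ odd #|F|]|.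
Definition EO (d : rel V) : nat :=
  #|[set F : {set V * V} | eulerian_sub d F && odd #|F|]|.

Definition AT_ok (e : rel V) (k : nat) : Prop :=
  exists d : rel V, orientation e d /\ (forall v, outdeg d v < k) /\ EE d <> EO d.

Definition is_AT (e : rel V) (k : nat) : Prop :=
  AT_ok e k /\ forall j, AT_ok e j -> k <= j.

(* Correspondence assignment (L, C) with lists of size k; colors are nats.
   C u v c c' means (u,c) and (v,c') are matched in C_{uv}. *)
Definition corr_assignment (e : rel V) (k : nat)
    (L : V -> seq nat) (C : V -> V -> rel nat) : Prop :=
  (forall v, uniq (L v) /\ size (L v) = k) /\
  (forall u v c c', C u v c c' = C v u c' c) /\
  (forall u v c c', C u v c c' -> [/\ e u v, c \in L u & c' \in L v]) /\
  (forall u v c c1 c2, C u v c c1 -> C u v c c2 -> c1 = c2).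

Definition corr_coloring (e : rel V) (L : V -> seq nat) (C : V -> V -> rel nat)
    (phi : V -> nat) : Prop :=
  (forall v, phi v \in L v) /\ (forall u v, e u v -> ~~ C u v (phi u) (phi v)).

Definition corr_colorable (e : rel V) (k : nat) : Prop :=
  forall L C, corr_assignment e k L C -> exists phi, corr_coloring e L C phi.

Definition is_chiDP (e : rel V) (k : nat) : Prop :=
  corr_colorable e k /\ forall j, corr_colorable e j -> k <= j.

End Defs.

(* Main.v *)
Require Import Defs.
From mathcomp Require Import all_boot all_order all_algebra.
From mathcomp Require Import reals.
From mathcomp Require Import lra ring zify.
From Stdlib Require Import Classical.
Import Order.TTheory GRing.Theory Num.Theory.
Local Open Scope ring_scope.

Lemma sum_const_seq (R : pzSemiRingType) (I : Type) (s : seq I) (c : R) :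
  \sum_(a <- s) c = (size s)%:R * c.
Proof.
elim: s => [|x s IH]; first by rewrite big_nil mul0r.
by rewrite big_cons IH /= -nat1r mulrDl mul1r.
Qed.

Lemma bernoulli (x d : rat) (n : nat) : 0 <= x -> 0 <= d ->
  x ^+ n.+1 + n.+1%:R * x ^+ n * d <= (x + d) ^+ n.+1.
Proof.
move=> hx hd; elim: n => [|n IH]; first by rewrite !expr1 expr0 mulr1 mul1r.
rewrite (exprS (x + d)) .
have h1 : 0 <= x + d by lra.
have := ler_wpM2l h1 IH.
have hxn : 0 <= x ^+ n := exprn_ge0 n hx.
have : 0 <= n.+1%:R * x ^+ n * d * d.
  by apply: mulr_ge0 => //; apply: mulr_ge0 => //; apply: mulr_ge0.
rewrite !exprS -!natr1 => h2 h3.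
apply: le_trans h3; nra.
Qed.

Lemma bern_minus (z : rat) (h : nat) : 0 <= z -> z <= 1 ->
  1 - h%:R * z <= (1 - z) ^+ h.
Proof.
move=> h0 h1; elim: h => [|h IH]; first by rewrite mul0r subr0 expr0.
rewrite exprS -natr1.
have hz : 0 <= 1 - z by lra.
have := ler_wpM2l hz IH.
have : 0 <= h%:R * z * z by apply: mulr_ge0 => //; apply: mulr_ge0.
move=> h2 h3; apply: le_trans h3; nra.
Qed.


Definition Q (k j : nat) : rat := 1 - (1 - (k%:R)^-1) ^+ j.

Lemma base_bounds (k : nat) : (0 < k)%N -> 0 <= 1 - (k%:R : rat)^-1 <= 1.
Proof.
move=> hk; have hk' : 1 <= (k%:R : rat) by rewrite ler1n.
have h0 : 0 < (k%:R : rat)^-1 by rewrite invr_gt0; lra.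
have h1 : (k%:R : rat)^-1 <= 1 by rewrite invf_le1; lra.
apply/andP; split; lra.
Qed.

Lemma Q_bounds k j : (0 < k)%N -> 0 <= Q k j <= 1.
Proof.
move=> hk; have /andP[a b] := @base_bounds k hk.
have := exprn_ge0 j a; have := exprn_ile1 j a b.
rewrite /Q => c d; apply/andP; split; lra.
Qed.

Lemma QS k j : (0 < k)%N -> Q k j.+1 = Q k j + (1 - Q k j) / k%:R.
Proof. by move=> hk; rewrite /Q exprS; ring. Qed.

Lemma step_alg (kk q : rat) (N s0 : nat) : 0 < kk -> 0 <= q -> q <= 1 ->
  (N <= s0.+1)%N ->
  kk * q ^+ s0.+1 + N%:R * (q ^+ s0 - q ^+ s0.+1) <= kk * (q + (1 - q) / kk) ^+ s0.+1.
Proof.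
move=> hk h0 h1 hN.
have hd : 0 <= (1 - q) / kk by apply: divr_ge0; lra.
have B := @bernoulli q ((1 - q) / kk) s0 h0 hd.
have hqs : 0 <= q ^+ s0 := exprn_ge0 s0 h0.
have hdiff : 0 <= q ^+ s0 - q ^+ s0.+1.
  rewrite exprS; nra.
have hN' : (N%:R : rat) <= s0.+1%:R by rewrite ler_nat.
have E : kk * (s0.+1%:R * q ^+ s0 * ((1 - q) / kk)) = s0.+1%:R * (q ^+ s0 - q ^+ s0.+1).
  by rewrite exprS; field; lra.
have := ler_wpM2l (ltW hk) B.
rewrite mulrDr E => h2; apply: le_trans h2.
rewrite lerD2l; apply: ler_wpM2r => //.
Qed.


Lemma count_le1 (T : eqType) (P : pred T) (s : seq T) : uniq s ->
  (forall x y, P x -> P y -> x = y) -> (count P s <= 1)%N.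
Proof.
move=> us hP; elim: s us => [|x s IH] //= /andP[xs us].
case Px: (P x) => /=; last exact: IH.
suff -> : count P s = 0%N by [].
apply/eqP; rewrite -leqn0 leqNgt -has_count; apply/hasP => -[y ys Py].
by move: xs; rewrite (hP _ _ Px Py) ys.
Qed.

Lemma count_sum (T : Type) (P : pred T) (s : seq T) :
  count P s = (\sum_(c <- s) (P c : nat))%N.
Proof. by rewrite -sum1_count big_mkcond. Qed.

Lemma step_w (k j : nat) (La S : seq nat) (R : rel nat) :
  (0 < k)%N -> uniq La -> size La = k -> uniq S ->
  (forall a c1 c2, R a c1 -> R a c2 -> c1 = c2) ->
  (forall a1 a2 c, R a1 c -> R a2 c -> a1 = a2) ->
  \sum_(a <- La) Q k j ^+ size [seq c <- S | ~~ R a c] <= k%:R * Q k j.+1 ^+ size S.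
Proof.
move=> hk uLa sLa uS M1 M2.
have cnt1 a : (count (R a) S <= 1)%N by apply: count_le1 => // x y; apply: M1.
have Nle : (\sum_(a <- La) count (R a) S <= size S)%N.
  under eq_bigr => a _ do rewrite count_sum.
  rewrite exchange_big /= -sum1_size; apply: leq_sum => c _.
  rewrite -count_sum; apply: count_le1 => // x y; apply: M2.
have sz a : size [seq c <- S | ~~ R a c] = (size S - count (R a) S)%N.
  by rewrite size_filter -(count_predC (R a) S) addKn.
have /andP[q0 q1] := @Q_bounds k j hk.
case eS: (size S) => [|s0].
  under eq_bigr => a _ do rewrite sz eS sub0n expr0.
  by rewrite sum_const_seq sLa !expr0.
have term a : Q k j ^+ size [seq c <- S | ~~ R a c] =
   Q k j ^+ s0.+1 + (count (R a) S)%:R * (Q k j ^+ s0 - Q k j ^+ s0.+1).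
  rewrite sz eS; have := cnt1 a.
  case: (count (R a) S) => [|[|//]] _; first by rewrite subn0 mul0r addr0.
  by rewrite subn1 /= mul1r addrC subrK.
under eq_bigr => a _ do rewrite term.
rewrite big_split /= sum_const_seq sLa -mulr_suml -natr_sum QS //.
apply: step_alg => //; first by rewrite ltr0n.
by rewrite -eS.
Qed.


Lemma derand (V : finType) (k : nat) (L : V -> seq nat) (C : V -> V -> rel nat)
  (B : {set V}) :
  (0 < k)%N ->
  (forall v, uniq (L v) /\ size (L v) = k) ->
  (forall u v a c1 c2, C u v a c1 -> C u v a c2 -> c1 = c2) ->
  (forall u v a1 a2 c, C u v a1 c -> C u v a2 c -> a1 = a2) ->
  forall us : seq V, uniq us ->
  forall S : V -> seq nat, (forall w, uniq (S w)) ->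
  \sum_(w in B) Q k (size us) ^+ size (S w) < 1 ->
  exists ch : V -> nat, (forall u, u \in us -> ch u \in L u) /\
   forall w, w \in B -> has (fun c => all (fun u => ~~ C u w (ch u) c) us) (S w).
Proof.
move=> hk hL M1 M2; elim=> [|u us IH] /=.
  move=> _ S uS hsum; exists (fun _ => 0%N); split => // w wB.
  have: size (S w) != 0%N.
    apply/negP => /eqP e; move: hsum.
    rewrite (bigD1 w) //= e expr0.
    have : 0 <= \sum_(i in B | i != w) Q k 0 ^+ size (S i).
      apply: sumr_ge0 => i _; apply: exprn_ge0.
      by have /andP[] := @Q_bounds k 0 hk.
    lra.
  by case: (S w).
move=> /andP[uus uus'] S uS hsum.
pose F a := \sum_(w in B) Q k (size us) ^+ size [seq c <- S w | ~~ C u w a c].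
have : has (fun a => F a < 1) (L u).
  apply/negPn/negP => /hasPn hn.
  have h1 : k%:R <= \sum_(a <- L u) F a.
    have -> : (k%:R : rat) = \sum_(a <- L u) 1.
      by rewrite sum_const_seq mulr1 (proj2 (hL u)).
    rewrite big_seq_cond [X in _ <= X]big_seq_cond; apply: ler_sum => a /andP[aL _].
    by have := hn a aL; rewrite -leNgt.
  have h2 : \sum_(a <- L u) F a <= k%:R * \sum_(w in B) Q k (size us).+1 ^+ size (S w).
    rewrite /F exchange_big /= mulr_sumr; apply: ler_sum => w _.
    have [uL sL] := hL u.
    apply: step_w => //.
      by move=> a c1 c2; apply: M1.
    by move=> a1 a2 c; apply: M2.
  have hk' : 0 < (k%:R : rat) by rewrite ltr0n.
  have := ler_wpM2l (ltW hk') (ltW hsum).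
  move: h1 h2; rewrite mulr1 => h1 h2 h3.
  have : \sum_(w in B) Q k (size us).+1 ^+ size (S w) < 1 := hsum.
  nra.
case/hasP => a aL Fa.
have uS' : forall w, uniq [seq c <- S w | ~~ C u w a c] by move=> w; apply: filter_uniq.
have [ch' [ch'L ch'B]] := IH uus' _ uS' Fa.
exists (fun v => if v == u then a else ch' v); split.
  move=> v; rewrite inE; case: eqP => [->|_] //= vus; exact: ch'L.
move=> w wB; have /hasP [c cS hc] := ch'B w wB.
move: cS; rewrite mem_filter => /andP[nC cS].
apply/hasP; exists c => //=; rewrite eqxx nC /=.
apply/allP => v vus; have := allP hc v vus.
by case: eqP => [e|//]; move: uus; rewrite -e vus.
Qed.


Lemma nat_bound (t : nat) : (0 < t)%N -> (2 * t * t * 2 ^ t < 2 ^ (4 * t))%N.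
Proof.
move=> ht.
have h1 : (t < 2 ^ t)%N by apply: ltn_expl.
have h2 : (2 <= 2 ^ t)%N by rewrite -{1}(expn1 2) leq_exp2l.
have -> : (2 ^ (4 * t) = 2 ^ t * 2 ^ t * 2 ^ t * 2 ^ t)%N.
  by rewrite -!expnD; congr (_ ^ _)%N; lia.
set p := (2 ^ t)%N in h1 h2 *.
have h3 : (t * t < p * p)%N by apply: ltn_mul.
have h4 : (2 * t * t * p < 2 * (p * p) * p)%N.
  rewrite ltn_mul2r -mulnA ltn_mul2l h3 andbT /=.
  by rewrite andbT (leq_trans _ h2).
apply: (leq_trans h4).
have : (2 * (p * p) * p <= p * (p * p) * p)%N.
  by rewrite leq_mul2r leq_mul2r h2 !orbT.
by rewrite !mulnA.
Qed.

Lemma half_pow (P : nat) : (0 < P)%N ->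
  (1 - (P%:R : rat)^-1) ^+ P <= 2^-1.
Proof.
case: P => // p _.
set z := ((p.+1)%:R : rat)^-1.
have hz0 : 0 <= z by rewrite invr_ge0 ler0n.
have hz1 : z <= 1 by rewrite invf_le1 ?ltr0n // ler1n.
have hpz : p.+1%:R * z = 1 by rewrite mulfV // pnatr_eq0.
have b := @bernoulli 1 z p ler01 hz0.
rewrite !expr1n mulr1 hpz in b.
have hprod : (1 - z) ^+ p.+1 * (1 + z) ^+ p.+1 <= 1.
  rewrite -exprMn; apply: exprn_ile1; nra.
have hA : 0 <= (1 - z) ^+ p.+1 by apply: exprn_ge0; lra.
have -> : (2^-1 : rat) = 1 / 2 by rewrite div1r.
rewrite ler_pdivlMr; last by lra.
nra.
Qed.

Lemma numeric (t : nat) : (0 < t)%N ->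
  (2 * t * t * 2 ^ t)%:R * Q (4 * t * 2 ^ t) (2 * t * t * 2 ^ t) ^+ (4 * t * 2 ^ t) < 1.
Proof.
move=> ht.
set P := (2 ^ t)%N.
have hP : (0 < P)%N by rewrite expn_gt0.
set k := (4 * t * P)%N; set m := (2 * t * t * P)%N.
have hk : (0 < k)%N by rewrite /k; nia.
set x := 1 - (k%:R : rat)^-1.
have /andP[x0 x1] := @base_bounds k hk.
have hkR : 0 < (k%:R : rat) by rewrite ltr0n.
have e : ((2 * t * P)%:R : rat) * (k%:R)^-1 = 2^-1.
  have -> : k = (2 * (2 * t * P))%N by rewrite /k; lia.
  rewrite natrM; field; by rewrite !pnatr_eq0 -!lt0n hP ht.
have hkinv0 : 0 <= (k%:R : rat)^-1 by rewrite invr_ge0 ler0n.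
have hkinv1 : (k%:R : rat)^-1 <= 1 by rewrite invf_le1 // ler1n.
have xh : 2^-1 <= x ^+ (2 * t * P).
  by have := @bern_minus (k%:R^-1) (2 * t * P) hkinv0 hkinv1; rewrite e; lra.
have h20 : (0 : rat) <= 2^-1 by rewrite invr_ge0; lra.
have xm : (P%:R : rat)^-1 <= x ^+ m.
  have -> : m = (2 * t * P * t)%N by rewrite /m; lia.
  rewrite exprM /P natrX -exprVn.
  by apply: lerXn2r => //; rewrite nnegrE // exprn_ge0.
set z := (P%:R : rat)^-1.
have /andP[Q0 Q1] := @Q_bounds k m hk.
have Qz : Q k m <= 1 - z.
  rewrite /Q /z; move: xm; rewrite /x => xm; lra.
have z0 : 0 <= z by rewrite invr_ge0 ler0n.
have z1 : z <= 1 by rewrite invf_le1 ?ltr0n // ler1n.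
have hp := @half_pow P hP; rewrite -/z in hp.
have pw : forall q : rat, 0 <= q -> q <= 1 - z -> q ^+ (P * (4 * t)) <= 2^-1 ^+ (4 * t).
  move=> q q0 qz.
  rewrite exprM; apply: lerXn2r.
  - by rewrite nnegrE exprn_ge0.
  - by rewrite nnegrE.
  apply: le_trans hp; apply: lerXn2r => //; rewrite nnegrE //; lra.
have Qk : Q k m ^+ k <= 2^-1 ^+ (4 * t).
  have := pw _ Q0 Qz; have -> : (P * (4 * t))%N = k by rewrite /k; lia.
  by [].
have hm0 : (0 : rat) <= m%:R by rewrite ler0n.
apply: le_lt_trans (ler_wpM2l hm0 Qk) _.
rewrite exprVn ltr_pdivrMr ?exprn_gt0 // mul1r -natrX ltr_nat.
exact: nat_bound.
Qed.

Close Scope ring_scope.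

Definition Kmm (m : nat) : rel 'I_(m + m) := fun u v => (u < m)%N != (v < m)%N.

Lemma Kmm_simple m : simple_graph (Kmm m).
Proof. by split => [u v|v]; rewrite /Kmm ?eqxx // eq_sym. Qed.

Lemma ex_min_prop (P : nat -> Prop) n : P n -> exists a, P a /\ forall j, P j -> a <= j.
Proof.
elim: n {-2}n (leqnn n) => [|N IH] n hn Pn.
  by exists n; split => // j _; move: hn; rewrite leqn0 => /eqP ->.
case: (classic (exists j, j < n /\ P j)) => [[j [jn Pj]]|H].
  by apply: (IH j) => //; rewrite -ltnS (leq_trans jn hn).
exists n; split => // j Pj; rewrite leqNgt; apply/negP => jn; apply: H; by exists j.
Qed.

Lemma outdeg_sum (V : finType) (d : rel V) v : outdeg d v = \sum_w (d v w : nat).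
Proof. by rewrite /outdeg cardsE -sum1_card big_mkcond. Qed.

Lemma AT_lower m a : (0 < m) -> AT_ok (Kmm m) a -> m < 2 * a.
Proof.
move=> hm [d [hd [hout _]]].
have ha : 0 < a by apply: leq_ltn_trans (leq0n _) (hout (lshift m (Ordinal hm))).
have up : \sum_v outdeg d v <= (m + m) * a.-1.
  rewrite -[X in X * _](card_ord (m + m)) -sum_nat_const; apply: leq_sum => v _.
  by rewrite -ltnS prednK // hout.
have low : m * m <= \sum_v outdeg d v.
  under eq_bigr => v _ do rewrite outdeg_sum.
  rewrite big_split_ord /=.
  have l1 : \sum_(i < m) \sum_(j < m) (d (lshift m i) (rshift m j) : nat) <=
            \sum_(i < m) \sum_w (d (lshift m i) w : nat).
    apply: leq_sum => i _; rewrite [X in _ <= X]big_split_ord /=; exact: leq_addl.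
  have l2 : \sum_(j < m) \sum_(i < m) (d (rshift m j) (lshift m i) : nat) <=
            \sum_(j < m) \sum_w (d (rshift m j) w : nat).
    apply: leq_sum => j _; rewrite [X in _ <= X]big_split_ord /=; exact: leq_addr.
  apply: leq_trans (leq_add l1 l2).
  rewrite [X in _ <= _ + X]exchange_big /= -big_split /=.
  have one i j : (d (lshift m i) (rshift m j) : nat) + d (rshift m j) (lshift m i) = 1.
    have [h1 h2] := hd (lshift m i) (rshift m j).
    have : Kmm m (lshift m i) (rshift m j) by rewrite /Kmm /= ltn_ord ltnNge leq_addr.
    rewrite h1; move: h2.
    by case: (d (lshift m i) (rshift m j)); case: (d (rshift m j) (lshift m i)).
  under eq_bigr => i _ do rewrite -big_split /=.
  under eq_bigr => i _ do under eq_bigr => j _ do rewrite one.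
  by rewrite sum_nat_const card_ord sum_nat_const card_ord muln1.
have := leq_trans low up.
case: a ha {hout up low} => // a _ /=.
nia.
Qed.

Lemma AT_ok_top m : AT_ok (Kmm m) (m + m).+1.
Proof.
pose d0 : rel 'I_(m + m) := fun u v => (u < m) && ~~ (v < m).
have eul F : eulerian_sub d0 F -> F = set0.
  case/andP => sub /forallP bal.
  apply/setP => p; rewrite inE; apply/negP => pF.
  have := subsetP sub p pF; rewrite inE /d0 => /andP[p1 p2].
  have := bal p.1; rewrite eq_sym => /eqP.
  have -> : [set q in F | q.2 == p.1] = set0.
    apply/setP => q; rewrite !inE; apply/negP => /andP[qF /eqP e].
    have := subsetP sub q qF; rewrite inE /d0 e p1 /= => /andP[_].
    by [].
  rewrite cards0 => /esym/eqP; rewrite cards_eq0 => /eqP/setP/(_ p).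
  by rewrite !inE pF eqxx.
exists d0; split; [|split].
- move=> u v; rewrite /Kmm /d0.
  by case: (u < m); case: (v < m).
- move=> v; rewrite ltnS; apply: leq_trans (max_card _) _; by rewrite card_ord.
- have -> : EO d0 = 0.
    apply/eqP; rewrite cards_eq0; apply/eqP/setP => F; rewrite !inE.
    apply/negP => /andP[/eul -> ]; by rewrite cards0.
  have : 0 < EE d0.
    apply/card_gt0P; exists set0; rewrite inE cards0 /= andbT.
    apply/andP; split; first exact: sub0set.
    by apply/forallP => v; rewrite !(eq_card0 _) //; move=> q; rewrite !inE.
  by case: (EE d0).
Qed.

Lemma AT_Kmm m : 0 < m -> exists a, is_AT (Kmm m) a /\ m < 2 * a.
Proof.
move=> hm; have [a [ha hmin]] := @ex_min_prop _ _ (AT_ok_top m).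
exists a; split; first by split.
exact: AT_lower ha.
Qed.


Lemma colorable_Kmm m k : 0 < k -> (m%:R * Q k m ^+ k < 1)%R ->
  corr_colorable (Kmm m) k.
Proof.
move=> hk hb L C [hL [hsym [hsupp hfun]]].
pose us := [seq lshift m i | i <- enum 'I_m].
pose B := [set rshift m j | j : 'I_m].
have M2 : forall u v a1 a2 c, C u v a1 c -> C u v a2 c -> a1 = a2.
  by move=> u v a1 a2 c; rewrite !(hsym u v) => h1 h2; apply: (hfun _ _ _ _ _ h1 h2).
have uus : uniq us by rewrite map_inj_uniq ?enum_uniq //; apply: lshift_inj.
have sz : size us = m by rewrite size_map size_enum_ord.
have uL : forall w, uniq (L w) by move=> w; case: (hL w).
have hsum : (\sum_(w in B) Q k (size us) ^+ size (L w) < 1)%R.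
  rewrite sz; under eq_bigr => w _ do rewrite (proj2 (hL w)).
  by rewrite sumr_const card_imset ?card_ord; [rewrite -mulr_natl | apply: rshift_inj].
have [ch [chL chB]] := @derand _ k L C B hk hL hfun M2 us uus L uL hsum.
have inA (v : 'I_(m + m)) : v < m -> v \in us.
  move=> h; apply/mapP; exists (Ordinal h); first by rewrite mem_enum.
  by apply: val_inj.
have inB (v : 'I_(m + m)) : ~~ (v < m) -> v \in B.
  rewrite -leqNgt => h; apply/imsetP.
  have h' : v - m < m by have := ltn_ord v; lia.
  exists (Ordinal h') => //; apply: val_inj => /=; lia.
pose P (v : 'I_(m + m)) c := all (fun u => ~~ C u v (ch u) c) us.
pose phi (v : 'I_(m + m)) := if v < m then ch v else nth 0 (L v) (find (P v) (L v)).
have phiB (v : 'I_(m + m)) : ~~ (v < m) -> phi v \in L v /\ P v (phi v).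
  move=> h; have hh := chB v (inB v h); rewrite /phi (negbTE h); split.
    by apply: mem_nth; rewrite -has_find.
  exact: nth_find.
exists phi; split.
  move=> v; case h: (v < m); first by rewrite /phi h; apply: chL; apply: inA.
  by case: (phiB v (negbT h)).
have key (u v : 'I_(m + m)) : u < m -> ~~ (v < m) -> ~~ C u v (phi u) (phi v).
  move=> hu hv; have [_ /allP hP] := phiB v hv.
  by have := hP u (inA u hu); rewrite /phi hu.
move=> u v; rewrite /Kmm; case hu: (u < m); case hv: (v < m) => //= _.
  by apply: key; rewrite ?hu ?hv.
by rewrite hsym; apply: key; rewrite ?hu ?hv.
Qed.

Lemma chi_Kmm m k : 0 < m -> 0 < k -> (m%:R * Q k m ^+ k < 1)%R ->
  exists b, is_chiDP (Kmm m) b /\ 0 < b /\ b <= k.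
Proof.
move=> hm hk hb.
have [b [hb1 hmin]] := @ex_min_prop _ _ (@colorable_Kmm m k hk hb).
exists b; split; first by split.
split; last exact: hmin (@colorable_Kmm m k hk hb).
case: b hb1 {hmin} => // h0.
have [|phi [hphi _]] := h0 (fun _ => [::]) (fun _ _ _ _ => false).
  by split => //; split.
by have := hphi (lshift m (Ordinal hm)).
Qed.


Lemma master t : 0 < t ->
  exists a b, is_AT (Kmm (2 * t * t * 2 ^ t)) a /\ is_chiDP (Kmm (2 * t * t * 2 ^ t)) b
    /\ 0 < b /\ b * t < 4 * a.
Proof.
move=> ht.
have hP : 0 < 2 ^ t by rewrite expn_gt0.
have hm : 0 < 2 * t * t * 2 ^ t by rewrite !muln_gt0 ht hP.
have hk : 0 < 4 * t * 2 ^ t by rewrite !muln_gt0 ht hP.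
have [a [hA ha]] := @AT_Kmm _ hm.
have [b [hB [hb0 hbk]]] := @chi_Kmm _ _ hm hk (@numeric t ht).
exists a, b; split => //; split => //; split => //.
have : b * t <= 4 * t * 2 ^ t * t by rewrite leq_mul2r hbk orbT.
move: ha; set P := 2 ^ t => ha h; nia.
Qed.


Local Open Scope ring_scope.

Theorem corollary2 :
  (forall N : nat, exists (n : nat) (e : rel 'I_n),
     (N <= n)%N /\ simple_graph e /\
     exists a b : nat, is_AT e a /\ is_chiDP e b /\ (b < a)%N) /\
  (forall (R : realType) (M : R), 0 < M ->
     exists (n : nat) (e : rel 'I_n), simple_graph e /\
     exists a b : nat, is_AT e a /\ is_chiDP e b /\ M < a%:R / b%:R).
Proof.
split.
  move=> N; pose t := N.+4.
  have ht : (0 < t)%N by [].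
  have [a [b [hA [hB [hb0 hbt]]]]] := @master _ ht.
  exists (2 * t * t * 2 ^ t + 2 * t * t * 2 ^ t)%N, (Kmm _); split.
    have : (t < 2 ^ t)%N by apply: ltn_expl.
    rewrite /t; nia.
  split; first exact: Kmm_simple.
  exists a, b; split => //; split => //.
  rewrite /t in hbt; nia.
move=> R M hM.
have h4M : 0 <= 4 * M by lra.
have hb := archi_boundP h4M.
set t0 := Num.Def.archi_bound (4 * M) in hb.
have ht : (0 < t0.+1)%N by [].
have [a [b [hA [hB [hb0 hbt]]]]] := @master _ ht.
exists _, (Kmm (2 * t0.+1 * t0.+1 * 2 ^ t0.+1)); split; first exact: Kmm_simple.
exists a, b; split => //; split => //.
have hbR : (0 : R) < b%:R by rewrite ltr0n.
rewrite ltr_pdivlMr //.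
have : (b * t0.+1)%:R < (4 * a)%:R :> R by rewrite ltr_nat.
rewrite !natrM -natr1 => h.
have : (t0%:R : R) * b%:R >= 0 by apply: mulr_ge0; rewrite ler0n.
nra.
Qed.
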